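(* For every local category $\mathbb{C}$, $\mathbf{R}[\mathbb{C}]$ is a restriction category.
   Context: Composition is diagrammatic. A local category is a category $\mathbb{C}$ with, for each object $M$, an object $\mathsf{L}M$ and a morphism $\eta_M:M\to\mathsf{L}M$ such that (L.1) $\mathsf{L}\mathsf{L}M=\mathsf{L}M$ and $\eta_{\mathsf{L}M}=\mathrm{id}$; (L.2) each $\eta_M$ is monic; (L.3) for every $M$ and $f:N\to\mathsf{L}M$ a pullback of $\eta_M$ along $f$ exists, with leg $m:P\to N$, such that $\mathsf{L}P=\mathsf{L}N$ and $m\eta_N=\eta_P$. An object $M$ is total if $M=\mathsf{L}M$ and $\eta_M=\mathrm{id}_M$. $\mathbf{R}[\mathbb{C}]$ has as objects the total objects of $\mathbb{C}$. A morphism $M\to N$ is an isomorphism class of pairs $(U,f)$ with $U$ an object of $\mathbb{C}$ satisfying $\mathsf{L}U=M$ and $f:U\to N$ a morphism, where $(U,f)$ and $(V,g)$ are isomorphic if there is an isomorphism $\varphi:U\to V$ with $\varphi\eta_V=\eta_U$ and $\varphi g=f$. The identity on $M$ is $(M,\mathrm{id}_M)$. The composite of $(U,f):M\to N$ and $(V,g):N\to P$ is $(W,\pi_Vg)$, where $W$ with projections $\pi_V:W\to V$ and $W\to U$ is a pullback of $\eta_V$ along $f$. The restriction of $(U,f)$ is $\overline{(U,f)}=(U,\eta_U):M\to M$. A restriction category is a category with an assignment to each $f:A\to B$ of $\bar f:A\to A$ such that: (R.1) $\bar ff=f$; (R.2) $\bar f\bar g=\bar g\bar f$ for $f:A\to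 B$, $g:A\to C$; (R.3) $\bar g\bar f=\overline{\bar gf}$ for $f:A\to B$, $g:A\to C$; (R.4) $f\bar g=\overline{fg}f$ for $f:A\to B$, $g:B\to C$. *)

(* Defs.v *)
From Stdlib Require Import ClassicalEpsilon RelationClasses.

Set Implicit Arguments.

(* Categories, presented by a type of objects and a type of arrows with
   domain / codomain maps.  comp f g is the diagrammatic composite f;g
   (meaningful when cod f = dom g). *)
Record Category := {
  ob : Type;
  ar : Type;
  dom : ar -> ob;
  cod : ar -> ob;
  idm : ob -> ar;
  comp : ar -> ar -> ar;
  dom_idm : forall A, dom (idm A) = A;
  cod_idm : forall A, cod (idm A) = A;
  dom_comp : forall f g, cod f = dom g -> dom (comp f g) = dom f;
  cod_comp : forall f g, cod f = dom g -> cod (comp f g) = cod g;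
  comp_idl : forall f, comp (idm (dom f)) f = f;
  comp_idr : forall f, comp f (idm (cod f)) = f;
  comp_assoc : forall f g h, cod f = dom g -> cod g = dom h ->
      comp (comp f g) h = comp f (comp g h)
}.

Arguments dom {c} _.
Arguments cod {c} _.
Arguments idm {c} _.
Arguments comp {c} _ _.

Section CatDefs.
Context {C : Category}.

Definition monic (e : ar C) : Prop :=
  forall a b : ar C, cod a = dom e -> cod b = dom e -> dom a = dom b ->
    comp a e = comp b e -> a = b.

Definition is_iso (phi : ar C) : Prop :=
  exists psi : ar C, dom psi = cod phi /\ cod psi = dom phi /\
    comp phi psi = idm (dom phi) /\ comp psi phi = idm (cod phi).

(* [is_pullback h f P m p] : P with legs m : P -> dom f and p : P -> dom h
   is a pullback of h along f (so m is the pulled-back copy of h). *)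
Definition is_pullback (h f : ar C) (P : ob C) (m p : ar C) : Prop :=
  dom m = P /\ cod m = dom f /\ dom p = P /\ cod p = dom h /\
  comp m f = comp p h /\
  forall (Q : ob C) (a b : ar C),
    dom a = Q -> cod a = dom f -> dom b = Q -> cod b = dom h ->
    comp a f = comp b h ->
    exists u : ar C, dom u = Q /\ cod u = P /\ comp u m = a /\ comp u p = b /\
      forall u' : ar C, dom u' = Q -> cod u' = P -> comp u' m = a ->
        comp u' p = b -> u' = u.
End CatDefs.

Record LocalCategory := {
  lcat : Category;
  Lo : ob lcat -> ob lcat;
  eta : ob lcat -> ar lcat;
  dom_eta : forall M, dom (eta M) = M;
  cod_eta : forall M, cod (eta M) = Lo M;
  L1_idem : forall M, Lo (Lo M) = Lo M;
  L1_eta : forall M, eta (Lo M) = idm (Lo M);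
  L2_monic : forall M, monic (eta M);
  L3_pullback : forall (M : ob lcat) (f : ar lcat), cod f = Lo M ->
    exists (P : ob lcat) (m p : ar lcat),
      is_pullback (eta M) f P m p /\ Lo P = Lo (dom f) /\
      comp m (eta (dom f)) = eta P
}.

Section RC.
Variable LC : LocalCategory.
Local Notation C := (lcat LC).
Local Notation L := (Lo LC).
Local Notation eta := (eta LC).

Definition total (M : ob C) : Prop := L M = M /\ eta M = idm M.

Definition RCob : Type := { M : ob C | total M }.

Definition RCpre (M N : RCob) : Type :=
  { uf : ob C * ar C | L (fst uf) = proj1_sig M /\ dom (snd uf) = fst uf /\
                        cod (snd uf) = proj1_sig N }.

Definition RCeq (M N : RCob) (x y : RCpre M N) : Prop :=
  let U := fst (proj1_sig x) in let f := snd (proj1_sig x) in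
  let V := fst (proj1_sig y) in let g := snd (proj1_sig y) in
  exists phi : ar C, dom phi = U /\ cod phi = V /\ is_iso phi /\
    comp phi (eta V) = eta U /\ comp phi g = f.

Definition RCid (M : RCob) : RCpre M M.
Proof.
  refine (exist _ (proj1_sig M, idm (proj1_sig M)) _); simpl.
  destruct M as [M [HL He]]; simpl.
  split; [exact HL | split; [apply dom_idm | apply cod_idm]].
Defined.

Definition pb_spec (M : ob C) (f : ar C) (w : ob C * ar C * ar C) : Prop :=
  let '(P, m, p) := w in
  is_pullback (eta M) f P m p /\ L P = L (dom f) /\ comp m (eta (dom f)) = eta P.

Definition choose_pb (M : ob C) (f : ar C) : ob C * ar C * ar C :=
  epsilon (inhabits (dom f, idm (dom f), idm (dom f))) (pb_spec M f).

Lemma choose_pb_spec (M : ob C) (f : ar C) :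
  cod f = L M -> pb_spec M f (choose_pb M f).
Proof.
  intro H. unfold choose_pb. apply epsilon_spec.
  destruct (L3_pullback LC M f H) as [P [m [p Hp]]].
  exists (P, m, p). exact Hp.
Qed.

Lemma RCcomp_ok (M N P : RCob) (x : RCpre M N) (y : RCpre N P) :
  let w := choose_pb (fst (proj1_sig y)) (snd (proj1_sig x)) in
  L (fst (fst w)) = proj1_sig M /\
  dom (comp (snd w) (snd (proj1_sig y))) = fst (fst w) /\
  cod (comp (snd w) (snd (proj1_sig y))) = proj1_sig P.
Proof.
  destruct x as [[U f] [HU [Hf1 Hf2]]]; destruct y as [[V g] [HV [Hg1 Hg2]]];
  simpl in *.
  assert (Hc : cod f = L V) by (rewrite Hf2; symmetry; exact HV).
  pose proof (choose_pb_spec V f Hc) as Hs.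
  destruct (choose_pb V f) as [[W m] p]; simpl in *.
  destruct Hs as [[Hm1 [Hm2 [Hp1 [Hp2 _]]]] [HL _]].
  assert (Hpg : cod p = dom g) by (rewrite Hp2, dom_eta; symmetry; exact Hg1).
  split; [rewrite HL, Hf1; exact HU|].
  split; [rewrite dom_comp by exact Hpg; exact Hp1|].
  rewrite cod_comp by exact Hpg; exact Hg2.
Qed.

(* Composite of (U,f) : M -> N and (V,g) : N -> P is (W, pi_V g), with W the
   (L.3)-pullback of eta_V along f. *)
Definition RCcomp (M N P : RCob) (x : RCpre M N) (y : RCpre N P) : RCpre M P :=
  let w := choose_pb (fst (proj1_sig y)) (snd (proj1_sig x)) in
  exist _ (fst (fst w), comp (snd w) (snd (proj1_sig y))) (RCcomp_ok x y).

Definition RCrst (M N : RCob) (x : RCpre M N) : RCpre M M.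
Proof.
  refine (exist _ (fst (proj1_sig x), eta (fst (proj1_sig x))) _); simpl.
  destruct (proj2_sig x) as [HU _].
  split; [exact HU | split; [apply dom_eta | rewrite cod_eta; exact HU]].
Defined.
End RC.

(* Restriction categories.  Hom-sets are setoids: a morphism of R[C] is an
   isomorphism class of representatives, modelled as the setoid of
   representatives modulo the isomorphism relation. *)
Record CatData := {
  cob : Type;
  chom : cob -> cob -> Type;
  ceq : forall A B, chom A B -> chom A B -> Prop;
  cid : forall A, chom A A;
  ccomp : forall A B C, chom A B -> chom B C -> chom A C;
  crst : forall A B, chom A B -> chom A A
}.

Arguments ceq {c A B} _ _.
Arguments cid {c} A.
Arguments ccomp {c A B C} _ _.
Arguments crst {c A B} _.

Definition is_category (D : CatData) : Prop :=
  (forall A B, Equivalence (@ceq D A B)) /\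
  (forall A B C (f f' : chom D A B) (g g' : chom D B C),
      ceq f f' -> ceq g g' -> ceq (ccomp f g) (ccomp f' g')) /\
  (forall A B (f : chom D A B), ceq (ccomp (cid A) f) f) /\
  (forall A B (f : chom D A B), ceq (ccomp f (cid B)) f) /\
  (forall A B C E (f : chom D A B) (g : chom D B C) (h : chom D C E),
      ceq (ccomp (ccomp f g) h) (ccomp f (ccomp g h))).

Definition is_restriction_category (D : CatData) : Prop :=
  is_category D /\
  (forall A B (f f' : chom D A B), ceq f f' -> ceq (crst f) (crst f')) /\
  (forall A B (f : chom D A B), ceq (ccomp (crst f) f) f) /\
  (forall A B C (f : chom D A B) (g : chom D A C),
      ceq (ccomp (crst f) (crst g)) (ccomp (crst g) (crst f))) /\
  (forall A B C (f : chom D A B) (g : chom D A C),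
      ceq (ccomp (crst g) (crst f)) (crst (ccomp (crst g) f))) /\
  (forall A B C (f : chom D A B) (g : chom D B C),
      ceq (ccomp f (crst g)) (ccomp (crst (ccomp f g)) f)).

Definition RCcat (LC : LocalCategory) : CatData :=
  {| cob := RCob LC;
     chom := @RCpre LC;
     ceq := @RCeq LC;
     cid := @RCid LC;
     ccomp := @RCcomp LC;
     crst := @RCrst LC |}.

(* Main.v *)
Require Import Defs.
From Stdlib Require Import ClassicalEpsilon RelationClasses.

Section Gen.
Context {C : Category}.
Definition hom (f : ar C) X Y := dom f = X /\ cod f = Y.
Lemma hom_comp f g X Y Z : hom f X Y -> hom g Y Z -> hom (comp f g) X Z.
Proof. intros [H1 H2] [H3 H4]. split.
  rewrite dom_comp; congruence. rewrite cod_comp; congruence. Qed.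
Lemma hom_id X : hom (idm X) X X.
Proof. split; [apply dom_idm|apply cod_idm]. Qed.
Lemma hom_cd f g X Y Z : hom f X Y -> hom g Y Z -> cod f = dom g.
Proof. intros [] []; congruence. Qed.
Lemma idl {f X Y} : hom f X Y -> comp (idm X) f = f.
Proof. intros [H _]; subst; apply comp_idl. Qed.
Lemma idr {f X Y} : hom f X Y -> comp f (idm Y) = f.
Proof. intros [_ H]; subst; apply comp_idr. Qed.
End Gen.
Arguments hom {C} f X Y.


Global Hint Resolve hom_comp hom_id : core.
Ltac cd := eapply hom_cd; eauto.
Ltac A := repeat rewrite comp_assoc by cd.

Section Gen2.
Context {C : Category}.
Lemma pb_hom_m {h f : ar C} {P m p} : is_pullback h f P m p -> hom m P (dom f).
Proof. intros [? [? _]]; split; auto. Qed.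
Lemma pb_hom_p {h f : ar C} {P m p} : is_pullback h f P m p -> hom p P (dom h).
Proof. intros [? [? [? [? _]]]]; split; auto. Qed.
Lemma pb_sq {h f : ar C} {P m p} : is_pullback h f P m p -> comp m f = comp p h.
Proof. intros [? [? [? [? [? _]]]]]; auto. Qed.
Lemma pb_exists {h f : ar C} {P m p Q a b} : is_pullback h f P m p ->
  hom a Q (dom f) -> hom b Q (dom h) -> comp a f = comp b h ->
  exists u, hom u Q P /\ comp u m = a /\ comp u p = b.
Proof. intros [? [? [? [? [? Hu]]]]] [] [] E.
  destruct (Hu Q a b) as [u [? [? [? [? _]]]]]; auto.
  exists u; repeat split; auto. Qed.
Lemma pb_uniq {h f : ar C} {P m p Q u u'} : is_pullback h f P m p ->
  hom u Q P -> hom u' Q P -> comp u m = comp u' m -> comp u p = comp u' p -> u = u'.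
Proof. intros Hp Hu Hu' E1 E2. pose proof (pb_hom_m Hp). pose proof (pb_hom_p Hp).
  pose proof (pb_sq Hp) as Sq.
  destruct Hp as [? [? [? [? [? Hun]]]]].
  assert (hh: hom h (dom h) (cod h)) by (split; auto).
  assert (hf: hom f (dom f) (cod f)) by (split; auto).
  assert (Hc : cod f = cod h).
  { assert (E : cod (comp m f) = cod (comp p h)) by congruence.
    rewrite !cod_comp in E by cd. auto. }
  destruct (Hun Q (comp u m) (comp u p)) as [v [? [? [? [? Hv]]]]].
  1-4: assert (K1 : hom (comp u m) Q (dom f)) by eauto;
     assert (K2 : hom (comp u p) Q (dom h)) by eauto; destruct K1, K2; assumption.
  - rewrite !comp_assoc by cd. rewrite Sq. reflexivity.
  - rewrite (Hv u), (Hv u'); auto; try apply Hu; try apply Hu'.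
Qed.
Lemma pb_self {h f : ar C} {P m p u} : is_pullback h f P m p ->
  hom u P P -> comp u m = m -> comp u p = p -> u = idm P.
Proof. intros Hp Hu E1 E2. pose proof (pb_hom_m Hp). pose proof (pb_hom_p Hp).
  eapply pb_uniq; eauto. rewrite E1; symmetry; eapply idl; eauto.
  rewrite E2; symmetry; eapply idl; eauto. Qed.
Lemma mk_iso {phi psi : ar C} {X Y} : hom phi X Y -> hom psi Y X ->
  comp phi psi = idm X -> comp psi phi = idm Y -> is_iso phi.
Proof. intros [] [] ? ?. exists psi; subst; repeat split; auto. Qed.
End Gen2.

Lemma assoc_rw {C : Category} {a b c d : ar C} : comp a b = c -> cod a = dom b -> cod b = dom d ->
  comp a (comp b d) = comp c d.
Proof. intros E H1 H2. rewrite <- comp_assoc by auto. congruence. Qed.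
Ltac rw E := first [rewrite E | rewrite (assoc_rw E) by cd].
Ltac rwl E := first [rewrite <- E | rewrite <- (assoc_rw (eq_sym E)) by cd].

Lemma iso_inv {C : Category} {phi : ar C} {U V} : is_iso phi -> hom phi U V ->
  exists psi, hom psi V U /\ comp phi psi = idm U /\ comp psi phi = idm V.
Proof. intros [psi [H1 [H2 [H3 H4]]]] [<- <-]. exists psi; repeat split; auto. Qed.

Section RCP.
Variable LC : LocalCategory.
Local Notation C := (lcat LC).
Local Notation L := (Lo LC).
Local Notation et := (eta LC).

Lemma hom_eta M : hom (et M) M (L M).
Proof. split; [apply dom_eta|apply cod_eta]. Qed.
Hint Resolve hom_eta : core.

Lemma eta_mon (M : ob C) a b X : hom a X M -> hom b X M -> comp a (et M) = comp b (et M) -> a = b.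
Proof. intros [] [] E. apply (L2_monic LC M); auto; try rewrite dom_eta; congruence. Qed.

Lemma getpb {V U : ob C} {f} : hom f U (L V) ->
  exists W m p, choose_pb LC V f = (W, m, p) /\ is_pullback (et V) f W m p /\
   hom m W U /\ hom p W V /\ comp m f = comp p (et V) /\ L W = L U /\ comp m (et U) = et W.
Proof. intros [Hd Hc]. pose proof (choose_pb_spec LC V f Hc) as Hs.
  destruct (choose_pb LC V f) as [[W m] p]. destruct Hs as [Hp [HL He]].
  exists W, m, p. pose proof (pb_hom_m Hp). pose proof (pb_hom_p Hp).
  pose proof (pb_sq Hp).
  rewrite dom_eta in *. rewrite Hd in *.
  refine (conj eq_refl (conj Hp (conj H (conj H0 (conj H1 (conj HL He)))))). Qed.

Ltac dx x U f HU hf := destruct x as [[U f] [HU [?Hf1 ?Hf2]]];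
   assert (hf : hom f U _) by (split; eassumption); simpl in *; unfold RCeq in *; simpl in *.

Lemma ceq_equiv A B : Equivalence (@RCeq LC A B).
Proof. split.
- intros x. dx x U f HU hf. exists (idm U). repeat split; auto.
  + apply dom_idm. + apply cod_idm.
  + eapply (@mk_iso _ _ (idm U)); eauto; eapply idl; eauto.
  + eapply idl; eauto. + eapply idl; eauto.
- intros x y. dx x U f HU hf. dx y V g HV hg.
  intros [phi [H1 [H2 [H3 [H4 H5]]]]].
  assert (hp : hom phi U V) by (split; auto).
  destruct (iso_inv H3 hp) as [psi [hs [E1 E2]]].
  exists psi; pose proof hs as [hs1 hs2]; repeat split; auto.
  + exact (mk_iso hs hp E2 E1).
  + rwl H4. rw E2. eapply idl; eauto.
  + rwl H5. rw E2. eapply idl; eauto.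
- intros x y z. dx x U f HU hf. dx y V g HV hg. dx z X h HX hh.
  intros [phi [H1 [H2 [H3 [H4 H5]]]]] [phi' [H1' [H2' [H3' [H4' H5']]]]].
  assert (hp : hom phi U V) by (split; auto).
  assert (hp' : hom phi' V X) by (split; auto).
  destruct (iso_inv H3 hp) as [psi [hs [E1 E2]]].
  destruct (iso_inv H3' hp') as [psi' [hs' [E1' E2']]].
  assert (hc : hom (comp phi phi') U X) by eauto. destruct hc as [hc1 hc2].
  exists (comp phi phi'); repeat split; auto.
  + eapply (@mk_iso _ _ (comp psi' psi)); eauto.
    * A. rw E1'. rewrite (idl hs). exact E1.
    * A. rw E2. rewrite (idl hp'). exact E2'.
  + A. rw H4'. exact H4.
  + A. rw H5'. exact H5.
Qed.

Lemma inv_data {U U' : ob C} {a a'} {X : ob C} {e e' : ar C} : hom a U U' -> hom a' U' U ->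
  comp a a' = idm U -> comp a' a = idm U' -> hom e' U' X -> comp a e' = e -> comp a' e = e'.
Proof. intros ha ha' E1 E2 he Fa. rwl Fa. rw E2. apply (idl he). Qed.

Lemma comp_proper (M N P : RCob LC) (x x' : RCpre M N) (y y' : RCpre N P) :
  RCeq x x' -> RCeq y y' -> RCeq (RCcomp x y) (RCcomp x' y').
Proof.
  dx x U f HU hf. dx x' U' f' HU' hf'. dx y V g HV hg. dx y' V' g' HV' hg'.
  intros [a [? [? [Ia [Ea Fa]]]]] [b [? [? [Ib [Eb Fb]]]]].
  assert (ha : hom a U U') by (split; auto).
  assert (hb : hom b V V') by (split; auto).
  destruct (iso_inv Ia ha) as [a' [ha' [E1a E2a]]].
  destruct (iso_inv Ib hb) as [b' [hb' [E1b E2b]]].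
  assert (Fa' : comp a' f = f') by exact (inv_data ha ha' E1a E2a hf' Fa).
  assert (Ea' : comp a' (et U) = et U') by exact (inv_data ha ha' E1a E2a (hom_eta U') Ea).
  assert (Eb' : comp b' (et V) = et V') by exact (inv_data hb hb' E1b E2b (hom_eta V') Eb).
  assert (hf0 : hom f U (L V)) by (rewrite HV; exact hf).
  assert (hf0' : hom f' U' (L V')) by (rewrite HV'; exact hf').
  destruct (getpb hf0) as [W [m [p [Ew [Pb [hm [hp [Sq [LW Em]]]]]]]]].
  destruct (getpb hf0') as [W' [m' [p' [Ew' [Pb' [hm' [hp' [Sq' [LW' Em']]]]]]]]].
  unfold RCcomp; simpl. rewrite Ew, Ew'; simpl.
  destruct (pb_exists Pb' (Q:=W) (a:=comp m a) (b:=comp p b)) as [phi [hphi [Pm Pp]]].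
  { rewrite Hf0; eauto. } { rewrite dom_eta; eauto. } { A. rw Fa. rw Eb. exact Sq. }
  destruct (pb_exists Pb (Q:=W') (a:=comp m' a') (b:=comp p' b')) as [psi [hpsi [Qm Qp]]].
  { rewrite Hf1; eauto. } { rewrite dom_eta; eauto. } { A. rw Fa'. rw Eb'. exact Sq'. }
  pose proof hphi as [? ?].
  exists phi; repeat split; auto.
  - apply (mk_iso hphi hpsi).
    + apply (pb_self Pb); eauto.
      * A. rw Qm. rw Pm. A. rw E1a. apply (idr hm).
      * A. rw Qp. rw Pp. A. rw E1b. apply (idr hp).
    + apply (pb_self Pb'); eauto.
      * A. rw Pm. rw Qm. A. rw E2a. apply (idr hm').
      * A. rw Pp. rw Qp. A. rw E2b. apply (idr hp').
  - rwl Em'. rw Pm. A. rw Ea. exact Em.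
  - rw Pp. A. rw Fb. reflexivity.
Qed.

Lemma rst_proper (M N : RCob LC) (x x' : RCpre M N) : RCeq x x' -> RCeq (RCrst x) (RCrst x').
Proof.
  dx x U f HU hf. dx x' U' f' HU' hf'.
  intros [a [? [? [Ia [Ea Fa]]]]]. exists a; repeat split; auto.
Qed.

Lemma left_id (M N : RCob LC) (x : RCpre M N) : RCeq (RCcomp (RCid M) x) x.
Proof.
  destruct M as [M0 [HL0 He0]]. dx x U f HU hf.
  unfold RCcomp; simpl.
  assert (hi : hom (idm M0) M0 (L U)) by (rewrite HU; auto).
  destruct (getpb hi) as [W [m [p [Ew [Pb [hm [hp [Sq [LW Em]]]]]]]]].
  rewrite Ew; simpl.
  assert (he : hom (et U) U M0) by (rewrite <- HU; auto).
  destruct (pb_exists Pb (Q:=U) (a:=et U) (b:=idm U)) as [u [hu [um up]]].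
  { rewrite dom_idm; auto. } { rewrite dom_eta; auto. }
  { rewrite (idr he). rewrite (idl (hom_eta U)). reflexivity. }
  pose proof hp as [? ?].
  exists p; repeat split; auto.
  - apply (mk_iso hp hu).
    + apply (pb_self Pb); eauto.
      * A. rw um. rwl Sq. apply (idr hm).
      * A. rw up. apply (idr hp).
    + exact up.
  - rewrite <- Em, <- Sq, He0. reflexivity.
Qed.

Lemma right_id (M N : RCob LC) (x : RCpre M N) : RCeq (RCcomp x (RCid N)) x.
Proof.
  destruct N as [N0 [HL0 He0]]. dx x U f HU hf.
  unfold RCcomp; simpl.
  assert (hf0 : hom f U (L N0)) by (rewrite HL0; auto).
  destruct (getpb hf0) as [W [m [p [Ew [Pb [hm [hp [Sq [LW Em]]]]]]]]].
  rewrite Ew; simpl.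
  rewrite He0 in Sq. rewrite (idr hp) in Sq.
  destruct (pb_exists Pb (Q:=U) (a:=idm U) (b:=f)) as [u [hu [um up]]].
  { rewrite Hf1; auto. } { rewrite dom_eta; auto. }
  { rewrite He0, (idr hf), (idl hf). reflexivity. }
  pose proof hm as [? ?].
  exists m; repeat split; auto.
  - apply (mk_iso hm hu).
    + apply (pb_self Pb); eauto.
      * A. rw um. apply (idr hm).
      * A. rw up. exact Sq.
    + exact um.
  - rewrite (idr hp). exact Sq.
Qed.

Lemma assoc_law (M N P Q : RCob LC) (x : RCpre M N) (y : RCpre N P) (z : RCpre P Q) :
  RCeq (RCcomp (RCcomp x y) z) (RCcomp x (RCcomp y z)).
Proof.
  dx x U f HU hf. dx y V g HV hg. dx z X h HX hh.
  unfold RCcomp; simpl.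
  assert (hf0 : hom f U (L V)) by (rewrite HV; exact hf).
  destruct (getpb hf0) as [W1 [m1 [p1 [Ew1 [Pb1 [hm1 [hp1 [Sq1 [LW1 Em1]]]]]]]]].
  rewrite Ew1; simpl.
  assert (hg0 : hom (comp p1 g) W1 (L X)) by (rewrite HX; eauto).
  destruct (getpb hg0) as [W2 [m2 [p2 [Ew2 [Pb2 [hm2 [hp2 [Sq2 [LW2 Em2]]]]]]]]].
  rewrite Ew2; simpl.
  assert (hg1 : hom g V (L X)) by (rewrite HX; exact hg).
  destruct (getpb hg1) as [W3 [m3 [p3 [Ew3 [Pb3 [hm3 [hp3 [Sq3 [LW3 Em3]]]]]]]]].
  rewrite Ew3; simpl.
  assert (hf1 : hom f U (L W3)) by (rewrite LW3, HV; exact hf).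
  destruct (getpb hf1) as [W4 [m4 [p4 [Ew4 [Pb4 [hm4 [hp4 [Sq4 [LW4 Em4]]]]]]]]].
  rewrite Ew4; simpl.
  destruct (pb_exists Pb3 (Q:=W2) (a:=comp m2 p1) (b:=p2)) as [bb [hbb [bm3 bp3]]].
  { rewrite Hf0; eauto. } { rewrite dom_eta; eauto. } { A. exact Sq2. }
  destruct (pb_exists Pb4 (Q:=W2) (a:=comp m2 m1) (b:=bb)) as [phi [hphi [Pm Pp]]].
  { rewrite Hf1; eauto. } { rewrite dom_eta; eauto. }
  { rwl Em3. rw bm3. A. rw Sq1. reflexivity. }
  destruct (pb_exists Pb1 (Q:=W4) (a:=m4) (b:=comp p4 m3)) as [a' [ha' [am1 ap1]]].
  { rewrite Hf1; eauto. } { rewrite dom_eta; eauto. }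
  { A. rw Em3. exact Sq4. }
  destruct (pb_exists Pb2 (Q:=W4) (a:=a') (b:=comp p4 p3)) as [psi [hpsi [Qm Qp]]].
  { rewrite dom_comp by cd. destruct hp1 as [-> _]. auto. } { rewrite dom_eta; eauto. }
  { A. rw ap1. A. rw Sq3. reflexivity. }
  assert (phia : comp phi a' = m2).
  { apply (pb_uniq Pb1 (Q:=W2)); eauto.
    - A. rw am1. rw Pm. reflexivity.
    - A. rw ap1. rw Pp. rw bm3. reflexivity. }
  assert (psib : comp psi bb = p4).
  { apply (pb_uniq Pb3 (Q:=W4)); eauto.
    - A. rw bm3. rw Qm. rw ap1. reflexivity.
    - A. rw bp3. rw Qp. reflexivity. }
  pose proof hphi as [? ?].
  exists phi; repeat split; auto.
  - apply (mk_iso hphi hpsi).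
    + apply (pb_self Pb2); eauto.
      * A. rw Qm. exact phia.
      * A. rw Qp. rw Pp. exact bp3.
    + apply (pb_self Pb4); eauto.
      * A. rw Pm. rw Qm. exact am1.
      * A. rw Pp. exact psib.
  - rwl Em4. rw Pm. A. rw Em1. exact Em2.
  - rw Pp. rw bp3. reflexivity.
Qed.

Lemma R1 (M N : RCob LC) (x : RCpre M N) : RCeq (RCcomp (RCrst x) x) x.
Proof.
  dx x U f HU hf. unfold RCcomp; simpl.
  destruct (getpb (hom_eta U)) as [W [m [p [Ew [Pb [hm [hp [Sq [LW Em]]]]]]]]].
  rewrite Ew; simpl.
  assert (mp : m = p) by (eapply eta_mon; eauto). subst m.
  destruct (pb_exists Pb (Q:=U) (a:=idm U) (b:=idm U)) as [u [hu [um up]]].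
  { rewrite dom_eta; auto. } { rewrite dom_eta; auto. } { reflexivity. }
  pose proof hp as [? ?].
  exists p; repeat split; auto.
  - apply (mk_iso hp hu).
    + apply (pb_self Pb); eauto; A; rw up; apply (idr hp).
    + exact up.
Qed.

Lemma R2 (A0 B0 C0 : RCob LC) (x : RCpre A0 B0) (y : RCpre A0 C0) :
  RCeq (RCcomp (RCrst x) (RCrst y)) (RCcomp (RCrst y) (RCrst x)).
Proof.
  dx x U f HU hf. dx y V g HV hg. unfold RCcomp; simpl.
  assert (h1 : hom (et U) U (L V)) by (rewrite HV, <- HU; auto).
  assert (h2 : hom (et V) V (L U)) by (rewrite HU, <- HV; auto).
  destruct (getpb h1) as [W [m [p [Ew [Pb [hm [hp [Sq [LW Em]]]]]]]]].
  destruct (getpb h2) as [W' [m' [p' [Ew' [Pb' [hm' [hp' [Sq' [LW' Em']]]]]]]]].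
  rewrite Ew, Ew'; simpl.
  destruct (pb_exists Pb' (Q:=W) (a:=p) (b:=m)) as [phi [hphi [Pm Pp]]].
  { rewrite dom_eta; auto. } { rewrite dom_eta; auto. } { symmetry; exact Sq. }
  destruct (pb_exists Pb (Q:=W') (a:=p') (b:=m')) as [psi [hpsi [Qm Qp]]].
  { rewrite dom_eta; auto. } { rewrite dom_eta; auto. } { symmetry; exact Sq'. }
  pose proof hphi as [? ?].
  exists phi; repeat split; auto.
  - apply (mk_iso hphi hpsi).
    + apply (pb_self Pb); eauto; A.
      * rw Qm. exact Pp.
      * rw Qp. exact Pm.
    + apply (pb_self Pb'); eauto; A.
      * rw Pm. exact Qp.
      * rw Pp. exact Qm.
  - rwl Em'. rw Pm. rwl Sq. exact Em.
  - rw Pp. exact Sq.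
Qed.

Lemma R3 (A0 B0 C0 : RCob LC) (x : RCpre A0 B0) (y : RCpre A0 C0) :
  RCeq (RCcomp (RCrst y) (RCrst x)) (RCrst (RCcomp (RCrst y) x)).
Proof.
  dx x U f HU hf. dx y V g HV hg. unfold RCcomp; simpl.
  assert (h1 : hom (et V) V (L U)) by (rewrite HU, <- HV; auto).
  destruct (getpb h1) as [W [m [p [Ew [Pb [hm [hp [Sq [LW Em]]]]]]]]].
  rewrite Ew; simpl.
  exists (idm W); repeat split; auto.
  - apply dom_idm. - apply cod_idm.
  - apply (mk_iso (hom_id W) (hom_id W)); apply (idl (hom_id W)).
  - apply (idl (hom_eta W)).
  - rewrite (idl (hom_eta W)). rewrite <- Em. exact Sq.
Qed.

Lemma R4 (A0 B0 C0 : RCob LC) (x : RCpre A0 B0) (y : RCpre B0 C0) :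
  RCeq (RCcomp x (RCrst y)) (RCcomp (RCrst (RCcomp x y)) x).
Proof.
  dx x U f HU hf. dx y V g HV hg. unfold RCcomp; simpl.
  assert (hf0 : hom f U (L V)) by (rewrite HV; exact hf).
  destruct (getpb hf0) as [W [m [p [Ew [Pb [hm [hp [Sq [LW Em]]]]]]]]].
  rewrite Ew; simpl.
  assert (h2 : hom (et W) W (L U)) by (rewrite <- LW; auto).
  destruct (getpb h2) as [W2 [m2 [p2 [Ew2 [Pb2 [hm2 [hp2 [Sq2 [LW2 Em2]]]]]]]]].
  rewrite Ew2; simpl.
  destruct (pb_exists Pb2 (Q:=W) (a:=idm W) (b:=m)) as [phi [hphi [Pm Pp]]].
  { rewrite dom_eta; auto. } { rewrite dom_eta; auto. }
  { rewrite (idl (hom_eta W)). symmetry; exact Em. }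
  pose proof hphi as [? ?].
  exists phi; repeat split; auto.
  - apply (mk_iso hphi hm2).
    + exact Pm.
    + apply (pb_self Pb2); eauto; A.
      * rw Pm. apply (idr hm2).
      * rw Pp. apply (eta_mon U _ _ W2); eauto. A. rw Em. exact Sq2.
  - rwl Em2. rw Pm. apply (idl (hom_eta W)).
  - rw Pp. exact Sq.
Qed.
End RCP.

Theorem proposition4p5 (LC : LocalCategory) : is_restriction_category (RCcat LC).
Proof.
  split; [split; [|split; [|split; [|split]]]|split; [|split; [|split; [|split]]]]; simpl.
  - apply ceq_equiv.
  - intros; apply comp_proper; auto.
  - intros; apply left_id.
  - intros; apply right_id.
  - intros; apply assoc_law.
  - intros; apply rst_proper; auto.
  - intros; apply R1.
  - intros; apply R2.
  - intros; apply R3.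
  - intros; apply R4.
Qed.
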